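(* Let $M$ be an entrywise nonnegative $m\times n$ real matrix and let $M=AW$ be a stable nonnegative matrix factorization with $A\in\mathbb{R}_{\ge0}^{m\times r}$, $W\in\mathbb{R}_{\ge0}^{r\times n}$. Then for every column index $i$, the support of $W_i$ corresponds to a linearly independent set of columns of $A$.
   Context: $W_i$ denotes the $i$-th column of $W$; the support of a vector is the set of indices of its nonzero entries. $\mathrm{aff}(A)=\{\sum_k\alpha_kA_k:\alpha_k\ge0\}$ for columns $A_k$. A subset $S\subseteq[r]$ of columns of $A$ is admissible for $v\in\mathbb{R}^m$ if $v\in\mathrm{aff}(A_S)$ ($A_S$ = columns of $A$ in $S$); a subset $T\subseteq[r]$ of rows of $W$ is admissible for a row vector $u$ if $u$ is a nonnegative combination of the rows of $W$ indexed by $T$. Lexicographic ordering on subsets of $[r]$: if $|S|<|T|$ then $S$ precedes $T$; equal-size subsets compared by standard lexicographic order. $M=AW$ is stable if, with $S_i$ the lexicographically first subset of columns of $A$ admissible for the column $M_i$ and $T_j$ the lexicographically first subset of rows of $W$ admissible for the row $M^j$, each $W_i$ is supported in $S_i$ and each row $A^j$ of $A$ is supported in $T_j$. *)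

(* Defs.v *)
From HB Require Import structures.
From mathcomp Require Import all_boot all_order all_algebra.
Set Implicit Arguments. Unset Strict Implicit. Unset Printing Implicit Defensive.
Import Order.TTheory GRing.Theory Num.Theory.
Local Open Scope ring_scope.

Fixpoint lex_le (s t : seq nat) : bool :=
  match s, t with
  | [::], _ => true
  | _ :: _, [::] => false
  | x :: s', y :: t' => ((x < y)%N || ((x == y) && lex_le s' t'))
  end.

(* Ordering on subsets of [r]: smaller cardinality first, equal-size subsets
   compared lexicographically on their increasingly sorted elements
   (enum of a set of ordinals lists them in increasing order). *)
Definition subset_le (r : nat) (S T : {set 'I_r}) : bool :=
  (#|S| < #|T|)%N ||
  ((#|S| == #|T|) && lex_le (map val (enum S)) (map val (enum T))).

Definition col_admissible (R : realFieldType) (m r : nat)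
    (A : 'M[R]_(m, r)) (v : 'cV[R]_m) (S : {set 'I_r}) : Prop :=
  exists x : 'cV[R]_r,
    (forall k, 0 <= x k 0) /\ (forall k, k \notin S -> x k 0 = 0) /\ v = A *m x.

Definition row_admissible (R : realFieldType) (r n : nat)
    (W : 'M[R]_(r, n)) (u : 'rV[R]_n) (T : {set 'I_r}) : Prop :=
  exists y : 'rV[R]_r,
    (forall k, 0 <= y 0 k) /\ (forall k, k \notin T -> y 0 k = 0) /\ u = y *m W.

Definition lex_first_col (R : realFieldType) (m r : nat)
    (A : 'M[R]_(m, r)) (v : 'cV[R]_m) (S : {set 'I_r}) : Prop :=
  col_admissible A v S /\ forall S', col_admissible A v S' -> subset_le S S'.

Definition lex_first_row (R : realFieldType) (r n : nat)
    (W : 'M[R]_(r, n)) (u : 'rV[R]_n) (T : {set 'I_r}) : Prop :=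
  row_admissible W u T /\ forall T', row_admissible W u T' -> subset_le T T'.

Definition stable (R : realFieldType) (m r n : nat) (M : 'M[R]_(m, n))
    (A : 'M[R]_(m, r)) (W : 'M[R]_(r, n)) : Prop :=
  (forall (i : 'I_n) (S : {set 'I_r}), lex_first_col A (col i M) S ->
     forall k, W k i != 0 -> k \in S) /\
  (forall (j : 'I_m) (T : {set 'I_r}), lex_first_row W (row j M) T ->
     forall k, A j k != 0 -> k \in T).

(* Main.v *)
Require Import Defs.
From HB Require Import structures.
From mathcomp Require Import all_boot all_order all_algebra.
From mathcomp Require Import lra.
From Stdlib Require Import Classical.
Import Order.TTheory GRing.Theory Num.Theory.
Local Open Scope ring_scope.

Lemma lex_total s t : lex_le s t || lex_le t s.
Proof.
elim: s t => [|x s IH] [|y t] //=.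
by case: (ltngtP x y) => //=.
Qed.

Lemma lex_trans s t u : lex_le s t -> lex_le t u -> lex_le s u.
Proof.
elim: s t u => [|x s IH] [|y t] [|z u] //=.
move=> /orP[xy|/andP[/eqP-> st]] /orP[yz|/andP[/eqP<- tu]].
- by rewrite (ltn_trans xy yz).
- by rewrite xy.
- by rewrite yz.
- by rewrite eqxx (IH _ _ st tu) orbT.
Qed.

Lemma subset_le_total r (S T : {set 'I_r}) : subset_le S T || subset_le T S.
Proof.
have := lex_total (map val (enum S)) (map val (enum T)).
by rewrite /subset_le; case: (ltngtP #|S| #|T|) => //=.
Qed.

Lemma subset_le_trans r (S T U : {set 'I_r}) :
  subset_le S T -> subset_le T U -> subset_le S U.
Proof.
rewrite /subset_le => /orP[ST|/andP[/eqP-> st]] /orP[TU|/andP[/eqP<- tu]].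
- by rewrite (ltn_trans ST TU).
- by rewrite ST.
- by rewrite TU.
- by rewrite eqxx (lex_trans _ _ _ st tu) orbT.
Qed.

Lemma subset_le_card r (S T : {set 'I_r}) : subset_le S T -> (#|S| <= #|T|)%N.
Proof. by rewrite /subset_le => /orP[/ltnW//|/andP[/eqP-> _]]. Qed.

Lemma exists_min (T : eqType) (le : rel T) (P : T -> Prop) (s : seq T) :
  (forall a b, le a b || le b a) -> (forall a b c, le a b -> le b c -> le a c) ->
  (exists a, a \in s /\ P a) -> exists a, P a /\ forall b, b \in s -> P b -> le a b.
Proof.
move=> tot tr; elim: s => [|b0 s IH]; first by case=> a [].
have refl a : le a a by have := tot a a; rewrite orbb.
move=> Hex; case: (classic (exists a, a \in s /\ P a)) => [/IH [a [Pa Ha]]|NE].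
  case: (classic (P b0)) => Pb0.
    case/orP: (tot a b0) => h.
      exists a; split=> // b; rewrite inE => /orP[/eqP->|]//; exact: Ha.
    exists b0; split=> // b; rewrite inE => /orP[/eqP->|bs Pb]//.
    exact: tr h (Ha _ bs Pb).
  exists a; split=> // b; rewrite inE => /orP[/eqP->|]//; exact: Ha.
have Pb0 : P b0.
  case: Hex => a [] /[swap] Pa; rewrite inE => /orP[/eqP<-//|aS].
  by exfalso; apply: NE; exists a.
exists b0; split=> // b; rewrite inE => /orP[/eqP->//|bs Pb].
by exfalso; apply: NE; exists b.
Qed.

Theorem mainTheorem6 (R : realFieldType) (m n r : nat)
    (M : 'M[R]_(m, n)) (A : 'M[R]_(m, r)) (W : 'M[R]_(r, n)) :
  (forall i j, 0 <= M i j) ->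
  (forall i k, 0 <= A i k) ->
  (forall k j, 0 <= W k j) ->
  M = A *m W ->
  stable M A W ->
  forall i : 'I_n,
    free [seq col k A | k <- enum [set k : 'I_r | W k i != 0]].
Proof.
move=> M0 A0 W0 -> [stc _] i.
set D := [set k : 'I_r | W k i != 0].
have colM : col i (A *m W) = A *m col i W by rewrite !colE mulmxA.
have Dadm : col_admissible A (col i (A *m W)) D.
  exists (col i W); split; first by move=> k; rewrite mxE.
  by split=> // k; rewrite inE negbK mxE => /eqP.
have [S [Sadm Smin]] : exists S, col_admissible A (col i (A *m W)) S /\
    forall S', col_admissible A (col i (A *m W)) S' -> subset_le S S'.
  have DinE : D \in enum [set: {set 'I_r}] by rewrite mem_enum inE.
  have [S [SP Smin]] := @exists_min _ (@subset_le r)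
      (col_admissible A (col i (A *m W))) (enum [set: {set 'I_r}])
      (@subset_le_total r) (@subset_le_trans r)
      (ex_intro _ D (conj DinE Dadm)).
  by exists S; split=> // S' HS'; apply: Smin => //; rewrite mem_enum inE.
have DS : D \subset S.
  apply/subsetP => k; rewrite inE => Hk; exact: (stc i S (conj Sadm Smin) k Hk).
have cardD S' : col_admissible A (col i (A *m W)) S' -> (#|D| <= #|S'|)%N.
  move=> HS'; exact: leq_trans (subset_leq_card DS) (subset_le_card _ _ _ (Smin S' HS')).
have step (c : 'cV[R]_r) : (forall k, k \notin D -> c k 0 = 0) -> A *m c = 0 ->
    forall k1, 0 < c k1 0 -> False.
  move=> cs Ac k1 ck1.
  pose F k := W k i / c k 0.
  case: (@arg_minP _ R _ k1 (fun k => 0 < c k 0) F ck1) => k0 ck0 Fmin.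
  set t := F k0.
  have k0D : k0 \in D by apply/negPn/negP => /cs H; rewrite H ltxx in ck0.
  have t0 : 0 <= t by apply: divr_ge0 (W0 _ _) (ltW ck0).
  pose y := col i W - t *: c.
  have yadm : col_admissible A (col i (A *m W)) (D :\ k0).
    exists y; split.
      move=> k; rewrite !mxE; case: (ltrP 0 (c k 0)) => ck.
        have := Fmin k ck; rewrite /F ler_pdivlMr // => h; rewrite subr_ge0; exact: h.
      have := W0 k i; nra.
    split.
      move=> k; rewrite in_setD1 negb_and negbK => /orP[/eqP->|kD].
        by rewrite !mxE /t /F divfK ?subrr // (gt_eqF ck0).
      rewrite !mxE (cs _ kD); move: kD; rewrite inE negbK => /eqP->.
      by rewrite mulr0 subr0.
    by rewrite mulmxBr -scalemxAr Ac scaler0 subr0 colM.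
  have := cardD _ yadm; rewrite (cardsD1 k0 D) k0D.
  by rewrite add1n ltnn.
have key (c : 'cV[R]_r) : (forall k, k \notin D -> c k 0 = 0) -> A *m c = 0 -> c = 0.
  move=> cs Ac; apply/matrixP => k j; rewrite (ord1 j) mxE.
  case: (ltrgtP (c k 0) 0) => // h.
    exfalso; apply: (step (- c) _ _ k).
    - by move=> k' /cs; rewrite mxE => ->; rewrite oppr0.
    - by rewrite mulmxN Ac oppr0.
    - by rewrite mxE oppr_gt0.
  by exfalso; apply: (step c cs Ac k h).
case E : (enum D) => [|d e']; first by rewrite nil_free.
rewrite -E.
set X := map _ _.
rewrite -(in_tupleE X); apply/freeP => kk Hk j.
have szX : size X = size (enum D) by rewrite size_map.
pose c := \sum_(j < size X) kk j *: (delta_mx (nth d (enum D) j) 0 : 'cV[R]_r).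
have Ac : A *m c = 0.
  rewrite mulmx_sumr -[RHS]Hk; apply: eq_bigr => j' _.
  rewrite -scalemxAr -colE /= /X (nth_map d) //; rewrite -szX; exact: ltn_ord.
have cs k : k \notin D -> c k 0 = 0.
  move=> kD; rewrite summxE big1 // => j' _.
  have : nth d (enum D) j' \in D by rewrite -mem_enum mem_nth // -szX.
  rewrite !mxE => jD; case: eqP => [ekj|]; last by rewrite mulr0.
  by rewrite ekj jD in kD.
have c0 := key c cs Ac.
have : c (nth d (enum D) j) 0 = kk j.
  rewrite summxE (bigD1 j) //= big1 ?addr0.
    by rewrite !mxE !eqxx mulr1.
  move=> j' nj; rewrite !mxE eqxx andbT nth_uniq ?enum_uniq -?szX //.
  case: eqP => [ejj|_]; last by rewrite mulr0.
  by move: nj; rewrite (val_inj ejj) eqxx.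
by rewrite c0 mxE => <-.
Qed.
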